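(* Let $d\geq 2$. If $\rho=\sum_{0\le i\le j<d}p_{ij}\ket{D_{ij}}\bra{D_{ij}}$ is an extremal point of the convex set of separable diagonal symmetric states on $\mathbb{C}^d\otimes\mathbb{C}^d$, then $p_{ij}=2\sqrt{p_{ii}p_{jj}}$ for all $0\le i<j<d$.
   Context: Let $\{\ket{0},\dots,\ket{d-1}\}$ be the computational basis of $\mathbb{C}^d$. Define $\ket{D_{ii}}=\ket{ii}$ and, for $i<j$, $\ket{D_{ij}}=(\ket{ij}+\ket{ji})/\sqrt{2}$. A state $\rho$ on $\mathbb{C}^d\otimes\mathbb{C}^d$ is diagonal symmetric (DS) if $\rho=\sum_{0\le i\le j<d}p_{ij}\ket{D_{ij}}\bra{D_{ij}}$ with $p_{ij}\ge 0$ and $\sum_{i\le j}p_{ij}=1$. A state is separable if it is a convex combination of product states $\rho^A\otimes\rho^B$. An extremal point of a convex set is an element that cannot be written as a nontrivial convex combination of two other elements of the set. *)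

(* Defs.v *)
(* real numbers R : realType (MathComp-Analysis),
   complex numbers R[i] (mathcomp-real-closed), tensor product of matrices
   A *t B (mathcomp-real-closed mxtens, Kronecker product, row-major index
   i*n+j for the basis vector |i> (x) |j>). *)
From HB Require Import structures.
From mathcomp Require Import all_boot all_order all_algebra.
From mathcomp Require Import all_reals.
From mathcomp.real_closed Require Import complex mxtens.
Set Implicit Arguments. Unset Strict Implicit. Unset Printing Implicit Defensive.
Import Order.TTheory GRing.Theory Num.Theory.
Local Open Scope ring_scope.
Local Open Scope complex_scope.

Definition adjmx (R : rcfType) (m n : nat) (A : 'M[R[i]]_(m, n)) : 'M[R[i]]_(n, m) :=
  (map_mx Num.conj A)^T.

Definition psd (R : rcfType) (n : nat) (A : 'M[R[i]]_n) : Prop :=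
  adjmx A = A /\ forall v : 'cV[R[i]]_n, 0 <= (adjmx v *m A *m v) 0 0.

Definition density (R : rcfType) (n : nat) (A : 'M[R[i]]_n) : Prop :=
  psd A /\ \tr A = 1.

Definition ket (R : rcfType) (d : nat) (k : 'I_d) : 'cV[R[i]]_d := delta_mx k 0.

Definition proj (R : rcfType) (n : nat) (v : 'cV[R[i]]_n) : 'M[R[i]]_n := v *m adjmx v.

Definition Dket (R : rcfType) (d : nat) (a b : 'I_d) : 'cV[R[i]]_(d * d) :=
  if a == b then ket R a *t ket R b
  else ((Num.sqrt (2 : R))^-1)%:C *: (ket R a *t ket R b + ket R b *t ket R a).

Definition DSmx (R : rcfType) (d : nat) (p : 'I_d -> 'I_d -> R) : 'M[R[i]]_(d * d) :=
  \sum_(a < d) \sum_(b < d | (a <= b)%N) (p a b)%:C *: proj (@Dket R d a b).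

Definition DS_coeffs (R : rcfType) (d : nat) (p : 'I_d -> 'I_d -> R) : Prop :=
  (forall a b : 'I_d, (a <= b)%N -> 0 <= p a b) /\
  \sum_(a < d) \sum_(b < d | (a <= b)%N) p a b = 1.

Definition is_DS (R : rcfType) (d : nat) (rho : 'M[R[i]]_(d * d)) : Prop :=
  exists p : 'I_d -> 'I_d -> R, DS_coeffs p /\ rho = DSmx p.

Definition separable (R : rcfType) (d : nat) (rho : 'M[R[i]]_(d * d)) : Prop :=
  exists (n : nat) (w : 'I_n -> R) (A B : 'I_n -> 'M[R[i]]_d),
    (forall k, 0 <= w k) /\ \sum_(k < n) w k = 1 /\
    (forall k, density (A k) /\ density (B k)) /\
    rho = \sum_(k < n) (w k)%:C *: (A k *t B k).

Definition sepDS (R : rcfType) (d : nat) (rho : 'M[R[i]]_(d * d)) : Prop :=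
  is_DS rho /\ separable rho.

Definition extremal (R : rcfType) (n : nat) (S : 'M[R[i]]_n -> Prop) (x : 'M[R[i]]_n) : Prop :=
  S x /\
  forall (y z : 'M[R[i]]_n) (t : R), S y -> S z -> 0 < t < 1 ->
    x = t%:C *: y + (1 - t)%:C *: z -> y = x /\ z = x.

(* Main.v *)
Require Import Defs.
From HB Require Import structures.
From mathcomp Require Import all_boot all_order all_algebra.
From mathcomp Require Import all_reals.
From mathcomp.real_closed Require Import complex mxtens.
From mathcomp Require Import zify ring lra.
Import Order.TTheory GRing.Theory Num.Theory.
Set Implicit Arguments. Unset Strict Implicit. Unset Printing Implicit Defensive.
Local Open Scope ring_scope.
Lemma conjE (R : rcfType) (x : R[i]) : Num.conj x = (x^*)%C.
Proof. by case: x. Qed.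

Lemma conj_realC (R : rcfType) (x : R) : Num.conj (x%:C)%C = (x%:C)%C.
Proof. by rewrite conjE conjc_real. Qed.

Definition ms d (i j k l : 'I_d) : bool :=
  ((i == k) && (j == l)) || ((i == l) && (j == k)).

Definition eD (R : rcfType) d (a b i j : 'I_d) : R :=
  if a == b then ((i == a) && (j == b))%:R
  else (Num.sqrt 2)^-1 * (((i == a) && (j == b))%:R + ((i == b) && (j == a))%:R).

Lemma ketE (R : rcfType) d (a i : 'I_d) (x : 'I_1) : ket R a i x = (i == a)%:R.
Proof. by rewrite /ket mxE [x]ord1 eqxx andbT. Qed.

Lemma o1 (x : 'I_1) : (x == 0) = true.
Proof. by rewrite [x]ord1. Qed.

Lemma DketE (R : rcfType) d (a b i j : 'I_d) :
  Dket R a b (mxtens_index (i, j)) 0 = ((eD R a b i j)%:C)%C.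
Proof.
rewrite /Dket /eD; case: ifP => _.
  by rewrite mxE mxtens_indexK /= /ket !mxE !o1 !andbT -natrM mulnb rmorph_nat.
rewrite !mxE !mxtens_indexK /= !o1 !andbT -!natrM !mulnb.
by rewrite rmorphM rmorphD /= !rmorph_nat.
Qed.

Lemma projE (R : rcfType) n (v : 'cV[R[i]]_n) r c :
  proj v r c = v r 0 * Num.conj (v c 0).
Proof. by rewrite /proj /adjmx mxE big_ord1 !mxE. Qed.

Lemma DSmx_entry (R : rcfType) d (p : 'I_d -> 'I_d -> R) (i j k l : 'I_d) :
  DSmx p (mxtens_index (i, j)) (mxtens_index (k, l)) =
  ((\sum_(a < d) \sum_(b < d | (a <= b)%N) p a b * eD R a b i j * eD R a b k l)%:C)%C.
Proof.
rewrite /DSmx summxE rmorph_sum; apply: eq_bigr => a _.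
rewrite summxE rmorph_sum; apply: eq_bigr => b _.
by rewrite mxE projE !DketE conj_realC -!rmorphM mulrA.
Qed.

Lemma eD_sym (R : rcfType) d (a b i j : 'I_d) : eD R a b j i = eD R a b i j.
Proof. rewrite /eD; case: eqP => [->|_]; first by rewrite andbC.
by rewrite addrC; congr (_ * (_ + _)); rewrite andbC.
Qed.

Definition cD d (i j a b : 'I_d) := ((i == a) && (j == b)) || ((i == b) && (j == a)).

Lemma eD0 (R : rcfType) d (a b i j : 'I_d) : ~~ cD i j a b -> eD R a b i j = 0.
Proof.
rewrite /cD /eD => /norP[/negbTE -> /negbTE ->].
by case: ifP => _ /=; rewrite ?addr0 ?mulr0.
Qed.

Lemma sqrt2V (R : rcfType) : (Num.sqrt (2:R))^-1 * (Num.sqrt (2:R))^-1 = 2^-1.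
Proof. by rewrite -invfM -expr2 sqr_sqrtr. Qed.

Lemma sumE2 (R : rcfType) d (p : 'I_d -> 'I_d -> R) (i j : 'I_d) : (i <= j)%N ->
  \sum_(a < d) \sum_(b < d | (a <= b)%N) p a b * eD R a b i j * eD R a b i j
  = if i == j then p i i else p i j / 2.
Proof.
move=> hij.
rewrite (bigD1 i) //= (bigD1 j) //= big1 ?addr0; first last.
- move=> b /andP[_ hb]; rewrite eD0 ?mulr0 //; rewrite /cD.
  apply/negP => /orP[/andP[_ /eqP ejb]|/andP[/eqP eib /eqP eji]];
    move/eqP: hb; apply; [by rewrite ejb| by rewrite -eib eji].
rewrite [X in _ + X]big1 ?addr0; last first.
  move=> a hai; apply: big1 => b hab; rewrite eD0 ?mulr0 // /cD.
  apply/negP => /orP[/andP[/eqP eia _]|/andP[/eqP eib /eqP eja]].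
    by move/eqP: hai; apply; rewrite eia.
  move/eqP: hai; apply; apply: val_inj => /=.
  move: hab hij; rewrite -eib -eja => hab hij.
  by apply/eqP; rewrite eqn_leq hab hij.
case: (eqVneq i j) => [<-|nij].
  by rewrite /eD !eqxx /= !mulr1.
rewrite /eD (negbTE nij) !eqxx /= addr0 mulr1.
by rewrite -mulrA sqrt2V.
Qed.

Definition symp (R : Type) d (p : 'I_d -> 'I_d -> R) (i j : 'I_d) :=
  if (i <= j)%N then p i j else p j i.

Lemma symp_sym (R : Type) d (p : 'I_d -> 'I_d -> R) (i j : 'I_d) : i != j -> symp p i j = symp p j i.
Proof.
move=> nij; rewrite /symp; case: (leqP i j) => h1; case: (leqP j i) => h2 //.
by case/eqP: nij; apply/val_inj/eqP; rewrite eqn_leq h1 h2.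
move: (leq_trans h1 (ltnW h2)); by rewrite ltnn.
Qed.

Lemma sumE2' (R : rcfType) d (p : 'I_d -> 'I_d -> R) (i j : 'I_d) :
  \sum_(a < d) \sum_(b < d | (a <= b)%N) p a b * eD R a b i j * eD R a b i j
  = if i == j then p i i else symp p i j / 2.
Proof.
case: (leqP i j) => h.
  by rewrite sumE2 // /symp h.
rewrite (eq_bigr (fun a : 'I_d => \sum_(b < d | (a <= b)%N) p a b * eD R a b j i * eD R a b j i));
  last by move=> a _; apply: eq_bigr => b _; rewrite (eD_sym R a b i j).
rewrite sumE2 ?(ltnW h) // /symp (leqNgt i j) h /= eq_sym.
by case: eqVneq => [->|].
Qed.

Lemma DSmx_nms (R : rcfType) d (p : 'I_d -> 'I_d -> R) (i j k l : 'I_d) :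
  ~~ ms i j k l -> DSmx p (mxtens_index (i, j)) (mxtens_index (k, l)) = 0.
Proof.
move=> nms; rewrite DSmx_entry big1 // => a _; rewrite big1 // => b _.
case: (boolP (cD i j a b)) => h1; last by rewrite eD0 ?mulr0 ?mul0r.
case: (boolP (cD k l a b)) => h2; last by rewrite (eD0 _ h2) mulr0.
case/negP: nms; move: h1 h2; rewrite /cD /ms.
by move=> /orP[/andP[/eqP-> /eqP->]|/andP[/eqP-> /eqP->]]
  /orP[/andP[/eqP-> /eqP->]|/andP[/eqP-> /eqP->]]; rewrite !eqxx ?orbT.
Qed.

Lemma DSmx_ms (R : rcfType) d (p : 'I_d -> 'I_d -> R) (i j k l : 'I_d) :
  ms i j k l -> DSmx p (mxtens_index (i, j)) (mxtens_index (k, l)) =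
  (((if i == j then p i i else symp p i j / 2))%:C)%C.
Proof.
rewrite DSmx_entry -sumE2' => /orP[/andP[/eqP<- /eqP<-]|/andP[/eqP<- /eqP<-]] //.
by f_equal; apply: eq_bigr => a _; apply: eq_bigr => b _; rewrite (eD_sym R a b j i).
Qed.

Definition Tw (R : rcfType) d (X : 'M[R[i]]_(d * d)) : 'M[R[i]]_(d * d) :=
  \matrix_(r, c) (if ms (mxtens_unindex r).1 (mxtens_unindex r).2
                        (mxtens_unindex c).1 (mxtens_unindex c).2 then X r c else 0).

Lemma TwE (R : rcfType) d (X : 'M[R[i]]_(d * d)) (i j k l : 'I_d) :
  Tw X (mxtens_index (i, j)) (mxtens_index (k, l)) =
  if ms i j k l then X (mxtens_index (i, j)) (mxtens_index (k, l)) else 0.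
Proof. by rewrite mxE !mxtens_indexK. Qed.

Lemma mx4P (R : Type) d (X Y : 'M[R]_(d * d)) :
  (forall i j k l : 'I_d, X (mxtens_index (i, j)) (mxtens_index (k, l)) =
                          Y (mxtens_index (i, j)) (mxtens_index (k, l))) -> X = Y.
Proof.
move=> h; apply/matrixP => r c.
by case: (mxtens_indexP r) => i j; case: (mxtens_indexP c) => k l; apply: h.
Qed.

Lemma Tw_DS (R : rcfType) d (p : 'I_d -> 'I_d -> R) : Tw (DSmx p) = DSmx p.
Proof.
apply: mx4P => i j k l; rewrite TwE; case: ifP => // /negbT h.
by rewrite DSmx_nms.
Qed.

Lemma Tw_lin (R : rcfType) d n (w : 'I_n -> R) (X : 'I_n -> 'M[R[i]]_(d * d)) :
  Tw (\sum_(k < n) (w k)%:C%C *: X k) = \sum_(k < n) (w k)%:C%C *: Tw (X k).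
Proof.
apply/matrixP => r c; rewrite mxE !summxE; case: ifP => h.
  by apply: eq_bigr => k _; rewrite !mxE h.
by rewrite big1 // => k _; rewrite !mxE h mulr0.
Qed.

Definition qAB (R : rcfType) d (A B : 'M[R[i]]_d) (i j : 'I_d) : R :=
  if i == j then complex.Re (A i i * B i i) else 2 * complex.Re (A i i * B j j).

Definition condAB (R : rcfType) d (A B : 'M[R[i]]_d) :=
  forall i j : 'I_d, i != j -> A i i * B j j = A i j * B j i /\ A i i * B j j = A j j * B i i.

Lemma ReM_real (R : rcfType) (a b : R[i]) : a = (complex.Re a)%:C%C -> b = (complex.Re b)%:C%C ->
  a * b = (complex.Re (a * b))%:C%C.
Proof. by move=> -> ->; rewrite -rmorphM. Qed.

Lemma Tw_tens (R : rcfType) d (A B : 'M[R[i]]_d) :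
  (forall i, A i i = (complex.Re (A i i))%:C%C) -> (forall i, B i i = (complex.Re (B i i))%:C%C) ->
  condAB A B -> Tw (A *t B) = DSmx (qAB A B).
Proof.
move=> hA hB hc; apply: mx4P => i j k l; rewrite TwE.
case: ifP => hms; last by rewrite DSmx_nms // hms.
rewrite DSmx_ms // tensmxE.
case: (eqVneq i j) => [eij|nij].
  move: hms; rewrite /ms -eij => /orP[/andP[/eqP<- /eqP<-]|/andP[/eqP<- /eqP<-]];
  by rewrite /qAB eqxx -ReM_real.
have hs : symp (qAB A B) i j = 2 * complex.Re (A i i * B j j).
  rewrite /symp /qAB; case: ifP => _; first by rewrite (negbTE nij).
  rewrite eq_sym (negbTE nij); case: (hc _ _ nij) => _ ->; done.
rewrite hs [2 * _]mulrC mulfK ?pnatr_eq0 // -ReM_real //.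
move: hms; rewrite /ms => /orP[/andP[/eqP<- /eqP<-]|/andP[/eqP<- /eqP<-]] //.
by case: (hc _ _ nij) => ->.
Qed.

Lemma quadE (R : rcfType) n (A : 'M[R[i]]_n) (v : 'cV[R[i]]_n) :
  (adjmx v *m A *m v) 0 0 = \sum_r \sum_c Num.conj (v r 0) * A r c * v c 0.
Proof.
rewrite mxE; under eq_bigr do rewrite mxE big_distrl /=.
rewrite exchange_big /=; apply: eq_bigr => r _; apply: eq_bigr => c _.
by rewrite !mxE.
Qed.

Lemma sum_d2r (R : rcfType) n (G : 'I_n -> R[i]) (x y : R[i]) (i j : 'I_n) : i != j ->
  \sum_c G c * (x * (c == i)%:R + y * (c == j)%:R) = G i * x + G j * y.
Proof.
move=> nij; under eq_bigr do rewrite mulrDr.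
rewrite big_split /=; congr (_ + _).
  rewrite (bigD1 i) //= eqxx mulr1 big1 ?addr0 // => c /negbTE ->; by rewrite mulr0 mulr0.
rewrite (bigD1 j) //= eqxx mulr1 big1 ?addr0 // => c /negbTE ->; by rewrite mulr0 mulr0.
Qed.

Lemma sum_d2l (R : rcfType) n (G : 'I_n -> R[i]) (x y : R[i]) (i j : 'I_n) : i != j ->
  \sum_c (x * (c == i)%:R + y * (c == j)%:R) * G c = x * G i + y * G j.
Proof.
move=> nij; under eq_bigr do rewrite mulrDl.
rewrite big_split /=; congr (_ + _).
  rewrite (bigD1 i) //= eqxx mulr1 big1 ?addr0 // => c /negbTE ->; by rewrite mulr0 mul0r.
rewrite (bigD1 j) //= eqxx mulr1 big1 ?addr0 // => c /negbTE ->; by rewrite mulr0 mul0r.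
Qed.

Lemma quad2 (R : rcfType) n (A : 'M[R[i]]_n) (i j : 'I_n) : psd A -> i != j ->
  forall x y : R[i], 0 <= Num.conj x * x * A i i + Num.conj x * y * A i j +
                          Num.conj y * x * A j i + Num.conj y * y * A j j.
Proof.
move=> [_ hA] nij x y; have := hA (x *: ket R i + y *: ket R j); rewrite quadE.
have hv : forall r, (x *: ket R i + y *: ket R j) r 0 = x * (r == i)%:R + y * (r == j)%:R.
  by move=> r; rewrite !mxE !o1 !andbT.
under eq_bigr do under eq_bigr do rewrite !hv.
under eq_bigr do rewrite sum_d2r //.
have hc : forall r, Num.conj (x * (r == i)%:R + y * (r == j)%:R) =
   Num.conj x * (r == i)%:R + Num.conj y * (r == j)%:R.
  by move=> r; rewrite rmorphD !rmorphM /= !rmorph_nat.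
under eq_bigr do rewrite hc -!mulrA -mulrDr.
rewrite sum_d2l //.
suff -> : Num.conj x * x * A i i + Num.conj x * y * A i j + Num.conj y * x * A j i +
  Num.conj y * y * A j j = Num.conj x * (A i i * x + A i j * y) +
  Num.conj y * (A j i * x + A j j * y) by [].
ring.
Qed.

Lemma psd_herm (R : rcfType) n (A : 'M[R[i]]_n) (i j : 'I_n) : psd A -> A j i = Num.conj (A i j).
Proof. by case=> h _; rewrite -{1}h /adjmx !mxE. Qed.

Lemma psd_diag_ge0 (R : rcfType) n (A : 'M[R[i]]_n) (i : 'I_n) : psd A -> 0 <= A i i.
Proof.
case=> _ hA; have := hA (ket R i); rewrite quadE.
rewrite (bigD1 i) //= [X in _ + X]big1 ?addr0; last first.
  by move=> r /negbTE hr; apply: big1 => c _; rewrite ketE hr rmorph0 !mul0r.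
rewrite (bigD1 i) //= big1 ?addr0; last first.
  by move=> c /negbTE hc; rewrite !ketE hc mulr0.
by rewrite !ketE eqxx rmorph1 mul1r mulr1.
Qed.

Lemma ge0_real (R : rcfType) (z : R[i]) : 0 <= z -> z = (complex.Re z)%:C%C /\ 0 <= complex.Re z.
Proof. by case: z => a b; rewrite lecE /= => /andP[/eqP -> h]. Qed.

Definition nsq (R : rcfType) (z : R[i]) : R := complex.Re z ^+ 2 + complex.Im z ^+ 2.

Lemma psd2 (R : rcfType) n (A : 'M[R[i]]_n) (i j : 'I_n) : psd A -> i != j ->
  nsq (A i j) <= complex.Re (A i i) * complex.Re (A j j).
Proof.
move=> hA nij.
have [hi a1ge0] := ge0_real (psd_diag_ge0 i hA).
have [hj a2ge0] := ge0_real (psd_diag_ge0 j hA).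
have hji := psd_herm i j hA.
move: (complex.Re (A i i)) (complex.Re (A j j)) hi hj a1ge0 a2ge0 => a1 a2 hi hj a1ge0 a2ge0.
have key : forall r s : R, 0 <= r ^+ 2 * a1 - 2 * r * s * nsq (A i j) + s ^+ 2 * nsq (A i j) * a2.
  move=> r s; have := quad2 hA nij (r%:C)%C (- (s%:C)%C * Num.conj (A i j)).
  rewrite hi hj hji; case: (A i j) => u w; rewrite lecE /= => /andP[_ h].
  apply: (le_trans h); rewrite le_eqVlt; apply/orP; left; apply/eqP.
  rewrite /nsq /=; ring.
have hN : 0 <= nsq (A i j) by rewrite /nsq addr_ge0 // sqr_ge0.
move: (nsq (A i j)) hN key => N hN key.
case: (eqVneq a1 0) => [a10|a1n0].
  subst a1; have h := key (a2 + 1) 1.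
  have : N <= 0 by nra.
  by rewrite mul0r.
have a1gt0 : 0 < a1 by rewrite lt_def a1n0.
have h := key N a1.
case: (eqVneq N 0) => [->|Nn0]; first by rewrite mulr_ge0.
have Ngt0 : 0 < N by rewrite lt_def Nn0.
have hp : 0 < a1 * N by rewrite mulr_gt0.
have : 0 <= (a1 * N) * (a1 * a2 - N).
  apply: (le_trans h); rewrite le_eqVlt; apply/orP; left; apply/eqP; ring.
by rewrite pmulr_rge0 // subr_ge0.
Qed.

Lemma f_facts (R : rcfType) n (A B : 'M[R[i]]_n) (i j : 'I_n) : psd A -> psd B -> i != j ->
  0 <= complex.Re (A i i * B j j + A j j * B i i - A i j * B j i - A j i * B i j) /\
  (complex.Re (A i i * B j j + A j j * B i i - A i j * B j i - A j i * B i j) = 0 ->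
   A i i * B j j = A i j * B j i /\ A i i * B j j = A j j * B i i).
Proof.
move=> hA hB nij.
have [hai ha1] := ge0_real (psd_diag_ge0 i hA).
have [haj ha2] := ge0_real (psd_diag_ge0 j hA).
have [hbi hb1] := ge0_real (psd_diag_ge0 i hB).
have [hbj hb2] := ge0_real (psd_diag_ge0 j hB).
have hpa := psd2 hA nij.
have hpb := psd2 hB (contra_neq esym nij).
rewrite (psd_herm i j hA) (psd_herm j i hB).
move: (complex.Re (A i i)) hai ha1 hpa => a1 hai ha1 hpa.
move: (complex.Re (A j j)) haj ha2 hpa => a2 haj ha2 hpa.
move: (complex.Re (B i i)) hbi hb1 hpb => b1 hbi hb1 hpb.
move: (complex.Re (B j j)) hbj hb2 hpb => b2 hbj hb2 hpb.
rewrite hai haj hbi hbj.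
move: (A i j) hpa => [u w] hpa; move: (B j i) hpb => [u' w'] hpb.
rewrite /nsq /= in hpa hpb.
have hP : 0 <= u ^+ 2 + w ^+ 2 by rewrite addr_ge0 // sqr_ge0.
have hQ : 0 <= u' ^+ 2 + w' ^+ 2 by rewrite addr_ge0 // sqr_ge0.
have hprod : (u ^+ 2 + w ^+ 2) * (u' ^+ 2 + w' ^+ 2) <= (a1 * a2) * (b2 * b1) by rewrite ler_pM.
have hid : (u * u' - w * w') ^+ 2 + (u * w' + w * u') ^+ 2 = (u ^+ 2 + w ^+ 2) * (u' ^+ 2 + w' ^+ 2) by ring.
rewrite -hid in hprod.
have hRe : complex.Re (a1%:C%C * b2%:C%C + a2%:C%C * b1%:C%C - (u +i* w)%C * (u' +i* w')%C -
     Num.conj (u +i* w)%C * Num.conj (u' +i* w')%C) = a1 * b2 + a2 * b1 - 2 * (u * u' - w * w').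
  rewrite /=; ring.
rewrite hRe -!rmorphM.
have -> : ((u +i* w) * (u' +i* w'))%C = ((u * u' - w * w') +i* (u * w' + w * u'))%C by [].
rewrite (_ : a1 * a2 * (b2 * b1) = (a1 * b2) * (a2 * b1)) in hprod; last by ring.
have hx : 0 <= a1 * b2 by rewrite mulr_ge0.
have hy : 0 <= a2 * b1 by rewrite mulr_ge0.
move: (u * u' - w * w') (u * w' + w * u') (a1 * b2) (a2 * b1) hprod hx hy => g1 g2 x y hprod hx hy.
have s1 := sqr_ge0 (x - y); have s2 := sqr_ge0 g2.
have h4 : 4 * g1 ^+ 2 <= (x + y) ^+ 2 by nra.
split.
  case: (lerP g1 0) => hg; first by lra.
  have hpos : 0 < 2 * g1 + x + y by lra.
  nra.
move=> h0.
have e1 : (x - y) ^+ 2 + 4 * g2 ^+ 2 <= 0 by nra.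
have ex : x = y by nra.
have eg2 : g2 = 0 by nra.
have eg1 : g1 = x by nra.
by rewrite eg2 eg1 ex.
Qed.

Notation iC := ('i%C : _[i]).

Lemma iC2 (R : rcfType) : (iC : R[i]) ^+ 2 = -1.
Proof. exact: sqr_i. Qed.

Lemma iC4 (R : rcfType) : (iC : R[i]) ^+ 4 = 1.
Proof. by rewrite (exprM iC 2 2) iC2 sqrrN expr1n. Qed.

Lemma conj_iC (R : rcfType) : Num.conj (iC : R[i]) = iC ^+ 3.
Proof.
rewrite exprS iC2 mulrN1 conjE.
by apply/eqP; rewrite eq_complex /= oppr0 !eqxx.
Qed.

Lemma iC_neq1 (R : rcfType) : (iC : R[i]) != 1.
Proof. by apply/eqP => h; have := congr1 (@complex.Im R) h => /= /eqP; rewrite oner_eq0. Qed.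

Lemma iCN_neq1 (R : rcfType) : - (iC : R[i]) != 1.
Proof. by apply/eqP => h; have := congr1 (@complex.Im R) h => /= /eqP; rewrite eqr_oppLR oppr0 oner_eq0. Qed.

Lemma N1_neq1 (R : rcfType) : - 1 != (1 : R[i]).
Proof.
apply/eqP => h; have e : (-1 : R) = 1 := congr1 (@complex.Re R) h.
by clear h; lra.
Qed.

Lemma iC_mod (R : rcfType) n : (iC : R[i]) ^+ n = iC ^+ (n %% 4).
Proof. by rewrite {1}(divn_eq n 4) mulnC exprD exprM iC4 expr1n mul1r. Qed.

Lemma iCn_eq1 (R : rcfType) n : ((iC : R[i]) ^+ n == 1) = (n %% 4 == 0)%N.
Proof.
rewrite iC_mod; have : (n %% 4 < 4)%N by rewrite ltn_mod.
case: (n %% 4)%N => [|[|[|[|r]]]] // _.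
- by rewrite expr0 eqxx.
- by rewrite expr1 (negbTE (iC_neq1 R)).
- by rewrite iC2 (negbTE (N1_neq1 R)).
- by rewrite exprS iC2 mulrN1 (negbTE (iCN_neq1 R)).
Qed.

Lemma geo4 (R : rcfType) (x : R[i]) : x ^+ 4 = 1 -> x != 1 -> \sum_(t < 4) x ^+ t = 0.
Proof.
move=> h4 h1; have := subrX1 x 4; rewrite h4 subrr => /esym /eqP.
by rewrite mulf_eq0 subr_eq0 (negbTE h1) /= => /eqP.
Qed.

Lemma tsum (R : rcfType) (a b : nat) : (a <= 2)%N -> (b <= 2)%N ->
  \sum_(t < 4) ((iC : R[i]) ^+ t) ^+ a * (Num.conj (iC ^+ t)) ^+ b =
  if a == b then 4%:R else 0.
Proof.
move=> ha hb.
have -> : \sum_(t < 4) ((iC : R[i]) ^+ t) ^+ a * (Num.conj (iC ^+ t)) ^+ b =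
          \sum_(t < 4) (iC ^+ (a + 3 * b)) ^+ t.
  apply: eq_bigr => t _; rewrite rmorphXn /= conj_iC -!exprM -exprD.
  congr (_ ^+ _); nia.
case: eqP => [<-|nab].
  rewrite (_ : (a + 3 * a = 4 * a)%N); last by nia.
  rewrite exprM iC4 expr1n.
  under eq_bigr do rewrite expr1n.
  by rewrite sumr_const card_ord.
apply: geo4; first by rewrite -exprM mulnC exprM iC4 expr1n.
rewrite iCn_eq1.
move: ha hb nab; case: a => [|[|[|a]]] //; case: b => [|[|[|b]]] //.
Qed.

Definition ph (R : rcfType) d (s : {ffun 'I_d -> 'I_4}) (m : 'I_d) : R[i] := iC ^+ (s m).
Definition Um (R : rcfType) d (s : {ffun 'I_d -> 'I_4}) : 'M[R[i]]_d := diag_mx (\row_m ph R s m).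
Definition conjm (R : rcfType) d (s : {ffun 'I_d -> 'I_4}) (A : 'M[R[i]]_d) :=
  Um R s *m A *m adjmx (Um R s).

Lemma adjmx_diag (R : rcfType) d (r : 'rV[R[i]]_d) :
  adjmx (diag_mx r) = diag_mx (map_mx Num.conj r).
Proof.
apply/matrixP => i j; rewrite /adjmx !mxE.
case: (eqVneq i j) => [->|nij]; first by rewrite !mulr1n.
by rewrite !mulr0n rmorph0.
Qed.

Lemma conjmE (R : rcfType) d s (A : 'M[R[i]]_d) i k :
  conjm s A i k = ph R s i * A i k * Num.conj (ph R s k).
Proof. by rewrite /conjm /Um adjmx_diag mul_diag_mx mul_mx_diag !mxE. Qed.

Lemma adjmxK (R : rcfType) m n (X : 'M[R[i]]_(m, n)) : adjmx (adjmx X) = X.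
Proof. by apply/matrixP => i j; rewrite /adjmx !mxE conjCK. Qed.

Lemma adjmxM (R : rcfType) m n p (X : 'M[R[i]]_(m, n)) (Y : 'M[R[i]]_(n, p)) :
  adjmx (X *m Y) = adjmx Y *m adjmx X.
Proof. by rewrite /adjmx map_mxM trmx_mul. Qed.

Lemma phK (R : rcfType) d s (m : 'I_d) : ph R s m * Num.conj (ph R s m) = 1.
Proof. by rewrite /ph rmorphXn /= conj_iC -exprMn -exprS iC4 expr1n. Qed.

Lemma density_conjm (R : rcfType) d s (A : 'M[R[i]]_d) : density A -> density (conjm s A).
Proof.
case=> [[hH hP] hT]; split; first split.
- by rewrite /conjm !adjmxM adjmxK hH mulmxA.
- move=> v; have := hP (adjmx (Um R s) *m v).
  by rewrite adjmxM adjmxK /conjm !mulmxA.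
- rewrite -hT /mxtrace; apply: eq_bigr => i _.
  by rewrite conjmE mulrAC phK mul1r.
Qed.

Lemma prod_ind (C : comPzRingType) d (f : 'I_d -> C) (i : 'I_d) :
  \prod_m f m ^+ (m == i) = f i.
Proof.
rewrite (bigD1 i) //= eqxx expr1 big1 ?mulr1 // => m /negbTE ->.
by rewrite expr0.
Qed.

Lemma ms_all d (i j k l : 'I_d) :
  [forall m, ((m == i) + (m == j) == (m == k) + (m == l))%N] = ms i j k l.
Proof.
apply/forallP/idP.
  move=> h; case: (eqVneq i k) => [eik|nik].
    subst k; move: (h j); rewrite eqxx eqn_add2l; case: (j =P l) => [<-|] //= _.
    by rewrite /ms !eqxx.
  move: (h i); rewrite eqxx (negbTE nik) /=; case: (i =P l) => [eil|] //= _.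
  subst l; move: (h j); rewrite eqxx [X in _ == X]addnC eqn_add2l; case: (j =P k) => [<-|] //= _.
  by rewrite /ms !eqxx orbT.
rewrite /ms => /orP[/andP[/eqP<- /eqP<-]|/andP[/eqP<- /eqP<-]] m //.
by rewrite addnC.
Qed.

Lemma charsum (R : rcfType) d (i j k l : 'I_d) :
  \sum_(s : {ffun 'I_d -> 'I_4}) ph R s i * ph R s j * Num.conj (ph R s k) * Num.conj (ph R s l)
  = if ms i j k l then (4 ^ d)%:R else 0.
Proof.
pose h (m : 'I_d) (t : 'I_4) : R[i] := (iC ^+ t) ^+ (m == i) * (iC ^+ t) ^+ (m == j) *
  (Num.conj (iC ^+ t)) ^+ (m == k) * (Num.conj (iC ^+ t)) ^+ (m == l).
have E : forall s : {ffun 'I_d -> 'I_4},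
    ph R s i * ph R s j * Num.conj (ph R s k) * Num.conj (ph R s l) = \prod_m h m (s m).
  move=> s; rewrite /h !big_split /=.
  rewrite (prod_ind (fun m => iC ^+ s m) i) (prod_ind (fun m => iC ^+ s m) j).
  rewrite (prod_ind (fun m => Num.conj (iC ^+ s m)) k) (prod_ind (fun m => Num.conj (iC ^+ s m)) l).
  done.
rewrite (eq_bigr _ (fun s _ => E s)) -bigA_distr_bigA /=.
have F : forall m, \sum_(t < 4) h m t = if ((m == i) + (m == j) == (m == k) + (m == l))%N then 4%:R else 0.
  move=> m; rewrite -tsum; last 2 first.
  - by case: (m == i); case: (m == j).
  - by case: (m == k); case: (m == l).
  by apply: eq_bigr => t _; rewrite /h -mulrA -!exprD.
rewrite (eq_bigr _ (fun m _ => F m)) -ms_all.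
case: forallP => hall.
  rewrite (eq_bigr (fun _ => 4%:R)); last by move=> m _; rewrite hall.
  by rewrite prodr_const card_ord natrX.
have [m hm] : exists m, ~~ ((m == i) + (m == j) == (m == k) + (m == l))%N.
  apply/existsP; rewrite -negb_forall; apply/negP => /forallP; exact: hall.
by rewrite (bigD1 m) //= (negbTE hm) mul0r.
Qed.

Lemma Tw_tens_sum (R : rcfType) d (A B : 'M[R[i]]_d) :
  Tw (A *t B) = \sum_(s : {ffun 'I_d -> 'I_4})
     ((((4 ^ d)%:R : R)^-1)%:C)%C *: (conjm s A *t conjm s B).
Proof.
apply: mx4P => i j k l; rewrite TwE summxE.
set c := ((((4 ^ d)%:R : R)^-1)%:C)%C.
rewrite (eq_bigr (fun s => (c * (A i k * B j l)) *
   (ph R s i * ph R s j * Num.conj (ph R s k) * Num.conj (ph R s l)))); last first.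
  by move=> s _; rewrite mxE tensmxE !conjmE; ring.
rewrite -mulr_sumr charsum tensmxE; case: ifP => _; last by rewrite mulr0.
rewrite /c fmorphV /= rmorph_nat mulrAC mulVf ?mul1r // pnatr_eq0 expn_eq0 /=.
done.
Qed.

Lemma diagRe (R : rcfType) d (A : 'M[R[i]]_d) a : psd A ->
  A a a = (complex.Re (A a a))%:C%C /\ 0 <= complex.Re (A a a).
Proof. by move=> hA; apply: ge0_real; apply: psd_diag_ge0. Qed.

Lemma ReM_diag (R : rcfType) d (A B : 'M[R[i]]_d) a b : psd A -> psd B ->
  complex.Re (A a a * B b b) = complex.Re (A a a) * complex.Re (B b b).
Proof.
move=> hA hB; have [ha _] := diagRe a hA; have [hb _] := diagRe b hB.
by rewrite {1}ha {1}hb -rmorphM.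
Qed.

Lemma qAB_ge0 (R : rcfType) d (A B : 'M[R[i]]_d) a b : psd A -> psd B -> 0 <= qAB A B a b.
Proof.
move=> hA hB; have [_ ha] := diagRe a hA; have [_ hb] := diagRe b hB.
have [_ ha'] := diagRe b hA; have [_ hb'] := diagRe a hB.
rewrite /qAB; case: ifP => _; rewrite !ReM_diag //.
  by rewrite mulr_ge0.
by rewrite mulr_ge0 // mulr_ge0.
Qed.

Lemma trRe (R : rcfType) d (A : 'M[R[i]]_d) : density A -> \sum_a complex.Re (A a a) = 1.
Proof.
case=> hA hT; apply: (@complexI R); rewrite rmorph_sum /=.
rewrite -[RHS]hT /mxtrace; apply: eq_bigr => a _.
by have [-> _] := diagRe a hA.
Qed.

Lemma qsum (R : rcfType) d (A B : 'M[R[i]]_d) : density A -> density B -> condAB A B ->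
  \sum_(a < d) \sum_(b < d | (a <= b)%N) qAB A B a b = 1.
Proof.
move=> hA hB hc.
pose g (a b : 'I_d) := complex.Re (A a a) * complex.Re (B b b).
have gsym : forall a b, g a b = g b a.
  move=> a b; case: (eqVneq a b) => [->//|nab].
  rewrite /g -!ReM_diag; try (by case: hA); try (by case: hB).
  by case: (hc _ _ nab) => _ ->.
have hq : forall a b, qAB A B a b = g a b + (a != b)%:R * g a b.
  move=> a b; rewrite /qAB /g !ReM_diag; try (by case: hA); try (by case: hB).
  by case: eqP => [<-|_] /=; [rewrite mul0r addr0 | ring].
have e1 : forall a : 'I_d, \sum_(b < d | (a <= b)%N) qAB A B a b =
    \sum_(b < d | (a <= b)%N) g a b + \sum_(b < d | (a < b)%N) g a b.
  move=> a; under eq_bigr do rewrite hq; rewrite big_split /=; congr (_ + _).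
  rewrite big_mkcond [RHS]big_mkcond; apply: eq_bigr => b _.
  case: (ltngtP a b) => h //=.
    have nab : a != b by apply/eqP => e; rewrite e ltnn in h.
    by rewrite nab /= mul1r.
  have eab : a == b by apply/eqP/val_inj.
  by rewrite eab /= mul0r.
under eq_bigr do rewrite e1.
rewrite big_split /=.
have e2 : \sum_(a < d) \sum_(b < d | (a < b)%N) g a b = \sum_(a < d) \sum_(b < d | (b < a)%N) g a b.
  under eq_bigr do rewrite big_mkcond /=.
  rewrite exchange_big /=; apply: eq_bigr => a _; rewrite [RHS]big_mkcond /=.
  by apply: eq_bigr => b _; rewrite gsym.
rewrite e2 -big_split /=.
have e3 : forall a : 'I_d, \sum_(b < d | (a <= b)%N) g a b + \sum_(b < d | (b < a)%N) g a b = \sum_b g a b.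
  move=> a; rewrite [RHS](bigID (fun b : 'I_d => (a <= b)%N)) /=; congr (_ + _).
  by apply: eq_bigl => b; rewrite ltnNge.
under eq_bigr do rewrite e3.
rewrite /g -big_distrlr /= trRe // trRe // mulr1.
done.
Qed.

Lemma DSmx_lin (R : rcfType) d n (v : 'I_n -> R) (q : 'I_n -> 'I_d -> 'I_d -> R) :
  \sum_(k < n) (v k)%:C%C *: DSmx (q k) = DSmx (fun a b => \sum_(k < n) v k * q k a b).
Proof.
rewrite /DSmx.
under [RHS]eq_bigr => a _ do under eq_bigr => b _ do rewrite rmorph_sum scaler_suml.
under [RHS]eq_bigr => a _ do rewrite exchange_big.
rewrite [RHS]exchange_big; apply: eq_bigr => k _.
rewrite scaler_sumr; apply: eq_bigr => a _; rewrite scaler_sumr; apply: eq_bigr => b _.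
by rewrite scalerA -rmorphM.
Qed.

Lemma sum_pairT (V : nmodType) n m (F : 'I_n * {ffun 'I_m -> 'I_4} -> V) :
  \sum_(x < #|{: 'I_n * {ffun 'I_m -> 'I_4}}|) F (enum_val x) = \sum_(k < n) \sum_(s : {ffun 'I_m -> 'I_4}) F (k, s).
Proof.
rewrite -big_enum_val pair_big /=; apply: eq_big => [[k s]|[k s] _] //.
Qed.

Lemma sepDS_Z (R : rcfType) d n (v : 'I_n -> R) (A B : 'I_n -> 'M[R[i]]_d) :
  (forall k, 0 <= v k) -> \sum_(k < n) v k = 1 ->
  (forall k, density (A k) /\ density (B k)) ->
  (forall k, 0 < v k -> condAB (A k) (B k)) ->
  sepDS (\sum_(k < n) (v k)%:C%C *: Tw (A k *t B k)).
Proof.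
move=> hv0 hv1 hAB hc; split.
  exists (fun a b => \sum_(k < n) v k * qAB (A k) (B k) a b); split; last first.
    rewrite -DSmx_lin; apply: eq_bigr => k _.
    case: (eqVneq (v k) 0) => [->|nv]; first by rewrite !scale0r.
    have vpos : 0 < v k by rewrite lt_def nv hv0.
    have [[hA _] [hB _]] := hAB k.
    rewrite Tw_tens //; [by move=> i; case: (diagRe i hA) | by move=> i; case: (diagRe i hB) | exact: hc].
  split.
    move=> a b _; apply: sumr_ge0 => k _; apply: mulr_ge0 => //.
    by have [[hA _] [hB _]] := hAB k; apply: qAB_ge0.
  under eq_bigr do rewrite exchange_big /=.
  rewrite exchange_big /= -[RHS]hv1; apply: eq_bigr => k _.
  under eq_bigr do rewrite -mulr_sumr.
  rewrite -mulr_sumr.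
  case: (eqVneq (v k) 0) => [->|nv]; first by rewrite mul0r.
  have vpos : 0 < v k by rewrite lt_def nv hv0.
  have [hA hB] := hAB k.
  by rewrite qsum ?mulr1 //; apply: hc.
pose c : R := ((4 ^ d)%:R)^-1.
pose T := ('I_n * {ffun 'I_d -> 'I_4})%type.
exists #|{: T}|, (fun x => v (enum_val x).1 * c),
  (fun x => conjm (enum_val x).2 (A (enum_val x).1)),
  (fun x => conjm (enum_val x).2 (B (enum_val x).1)).
have c0 : 0 <= c by rewrite invr_ge0 ler0n.
split; first by move=> x; rewrite mulr_ge0.
split.
  rewrite (sum_pairT (fun x : T => v x.1 * c)) /= -[RHS]hv1; apply: eq_bigr => k _.
  rewrite -mulr_sumr sumr_const card_ffun !card_ord -mulr_natr /c mulVf ?mulr1 //.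
  by rewrite pnatr_eq0 expn_eq0.
split.
  by move=> x; have [hA hB] := hAB (enum_val x).1; split; apply: density_conjm.
rewrite (sum_pairT (fun x : T => (v x.1 * c)%:C%C *: (conjm x.2 (A x.1) *t conjm x.2 (B x.1)))) /=.
apply: eq_bigr => k _; rewrite Tw_tens_sum scaler_sumr; apply: eq_bigr => s _.
by rewrite scalerA -rmorphM.
Qed.

Lemma ReD (R : rcfType) : {morph (@complex.Re R) : x y / x + y >-> x + y}.
Proof. by move=> [a b] [c e]. Qed.

Lemma ReCM (R : rcfType) (x : R) (z : R[i]) : complex.Re ((x%:C)%C * z) = x * complex.Re z.
Proof. by case: z => a b /=; rewrite mul0r subr0. Qed.

Lemma cond_from_sep (R : rcfType) d n (p : 'I_d -> 'I_d -> R) (w : 'I_n -> R)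
  (A B : 'I_n -> 'M[R[i]]_d) :
  DSmx p = \sum_(k < n) (w k)%:C%C *: (A k *t B k) ->
  (forall k, 0 <= w k) -> (forall k, density (A k) /\ density (B k)) ->
  forall k, 0 < w k -> condAB (A k) (B k).
Proof.
move=> hrho hw hAB k wk i j nij.
pose E (X : 'M[R[i]]_(d * d)) := X (mxtens_index (i, j)) (mxtens_index (i, j)) +
  X (mxtens_index (j, i)) (mxtens_index (j, i)) - X (mxtens_index (i, j)) (mxtens_index (j, i))
  - X (mxtens_index (j, i)) (mxtens_index (i, j)).
pose f k := A k i i * B k j j + A k j j * B k i i - A k i j * B k j i - A k j i * B k i j.
have E0 : E (DSmx p) = 0.
  rewrite /E !DSmx_ms /ms ?eqxx ?orbT //.
  by rewrite (negbTE nij) eq_sym (negbTE nij) addrAC addrK subrr.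
have Es : E (DSmx p) = \sum_(k < n) (w k)%:C%C * f k.
  rewrite hrho /E !summxE -big_split -!sumrB /=; apply: eq_bigr => l _.
  by rewrite !mxE !mxtens_indexK /f /=; ring.
have hRe : \sum_(k < n) w k * complex.Re (f k) = 0.
  rewrite -[RHS](_ : complex.Re 0 = 0) // -E0 Es (big_morph _ (@ReD R) (erefl _)).
  by apply: eq_bigr => l _; rewrite ReCM.
have [[hA _] [hB _]] := hAB k.
have hF : forall l, 0 <= w l * complex.Re (f l).
  move=> l; have [[hAl _] [hBl _]] := hAB l; exact: mulr_ge0 (hw l) (f_facts hAl hBl nij).1.
have := @psumr_eq0P _ _ _ _ (fun l _ => hF l) hRe k isT.
move/eqP; rewrite mulf_eq0 (gt_eqF wk) /= => /eqP hfk.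
exact: (f_facts hA hB nij).2 hfk.
Qed.

Unset Implicit Arguments.

Theorem corollary1 (R : realType) (d : nat) (p : 'I_d -> 'I_d -> R) :
  (2 <= d)%N ->
  DS_coeffs p ->
  extremal (@sepDS R d) (DSmx p) ->
  forall a b : 'I_d, (a < b)%N -> p a b = 2 * Num.sqrt (p a a * p b b).
Proof.
move=> _ hp [[hDS [n [w [A [B [hw0 [hw1 [hAB hrho]]]]]]]] hext] a b hab.
have hc := cond_from_sep hrho hw0 hAB.
have hrho2 : DSmx p = \sum_(k < n) (w k)%:C%C *: Tw (A k *t B k).
  by rewrite -Tw_lin -hrho Tw_DS.
have [k0 hk0] : exists k, 0 < w k.
  case: (boolP [exists k, 0 < w k]) => [/existsP //|/existsPn h].
  move: hw1; rewrite big1 => [/eqP|k _]; first by rewrite eq_sym oner_eq0.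
  by apply/eqP; rewrite eq_le hw0 andbT leNgt (negbTE (h k)).
pose dl (k : 'I_n) : R := (k == k0)%:R.
pose y := \sum_(k < n) (dl k)%:C%C *: Tw (A k *t B k).
have hy : sepDS y.
  apply: sepDS_Z => //.
  - by rewrite /dl (bigD1 k0) //= eqxx big1 ?addr0 // => k /negbTE ->.
  - move=> k; rewrite /dl; case: eqP => [-> _|_ /=]; [exact: hc | by rewrite ltxx].
have yE : y = Tw (A k0 *t B k0).
  rewrite /y (bigD1 k0) //= big1 ?addr0; first by rewrite /dl eqxx scale1r.
  by move=> k /negbTE hk; rewrite /dl hk scale0r.
have yrho : y = DSmx p.
  case: (eqVneq (w k0) 1) => [w1|wn1].
    rewrite hrho2 /y; apply: eq_bigr => k _; congr ((_%:C)%C *: _).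
    rewrite /dl; case: eqP => [->|/eqP nk] //=.
    have hs : \sum_(l < n | l != k0) w l = 0.
      by move: hw1; rewrite (bigD1 k0) //= w1; lra.
    by rewrite (psumr_eq0P (fun l _ => hw0 l) hs).
  have wlt1 : w k0 < 1.
    rewrite lt_neqAle wn1 -hw1 (bigD1 k0) //= lerDl sumr_ge0 //.
  set t := w k0.
  have t1 : 1 - t != 0 by rewrite subr_eq0 eq_sym.
  pose w' (k : 'I_n) : R := if k == k0 then 0 else w k / (1 - t).
  pose z := \sum_(k < n) (w' k)%:C%C *: Tw (A k *t B k).
  have hz : sepDS z.
    apply: sepDS_Z => //.
    - move=> k; rewrite /w'; case: ifP => // _; rewrite divr_ge0 // subr_ge0 ltW //.
    - rewrite /w' (bigD1 k0) //= eqxx add0r.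
      rewrite (eq_bigr (fun k => w k / (1 - t))); last by move=> k /negbTE ->.
      rewrite -mulr_suml; apply: (@mulIf _ (1 - t)) => //.
      rewrite mulfVK // mul1r; move: hw1; rewrite (bigD1 k0) //= => <-.
      by rewrite addrAC subrr add0r.
    - move=> k; rewrite /w'; case: ifP => _; first by rewrite ltxx.
      move=> h; apply: hc; move: h; rewrite pmulr_lgt0 // invr_gt0 subr_gt0 //.
  have := hext y z t hy hz; rewrite hk0 wlt1 => /(_ isT).
  have -> : DSmx p = t%:C%C *: y + (1 - t)%:C%C *: z.
    rewrite hrho2 /y /z !scaler_sumr -big_split /=; apply: eq_bigr => k _.
    rewrite !scalerA -scalerDl -!rmorphM -rmorphD; congr ((_%:C)%C *: _).
    rewrite /dl /w'; case: eqP => [->|_] /=; first by rewrite mulr1 mulr0 addr0.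
    by rewrite mulr0 add0r mulrC divfK.
  by case=> // ->.
have [[hA _] [hB _]] := hAB k0.
have hck := hc k0 hk0.
have hq : DSmx (qAB (A k0) (B k0)) = DSmx p.
  rewrite -yrho yE Tw_tens //.
  - by move=> i; case: (diagRe i hA).
  - by move=> i; case: (diagRe i hB).
have nab : a != b by apply/eqP => e; rewrite e ltnn in hab.
have ent : forall i j, DSmx (qAB (A k0) (B k0)) (mxtens_index (i, j)) (mxtens_index (i, j)) =
                      DSmx p (mxtens_index (i, j)) (mxtens_index (i, j)) by move=> i j; rewrite hq.
have e1 := ent a b; have e2 := ent a a; have e3 := ent b b.
rewrite !DSmx_ms /ms ?eqxx // (negbTE nab) /symp (ltnW hab) in e1 e2 e3.
move/complexI: e1 => e1; move/complexI: e2 => e2; move/complexI: e3 => e3.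
have pab : p a b = qAB (A k0) (B k0) a b.
  by apply: (@mulIf _ (2^-1)); rewrite ?invr_eq0 ?pnatr_eq0 // e1.
rewrite pab -e2 -e3 /qAB !eqxx (negbTE nab) !ReM_diag //.
have [_ ha] := diagRe a hA; have [_ hb] := diagRe b hB.
have [_ ha'] := diagRe b hA; have [_ hb'] := diagRe a hB.
have hsym : complex.Re (A k0 a a) * complex.Re (B k0 b b) = complex.Re (A k0 b b) * complex.Re (B k0 a a).
  by rewrite -!ReM_diag //; case: (hck a b nab) => _ ->.
have -> : complex.Re (A k0 a a) * complex.Re (B k0 a a) * (complex.Re (A k0 b b) * complex.Re (B k0 b b))
   = (complex.Re (A k0 a a) * complex.Re (B k0 b b)) ^+ 2.
  by rewrite expr2 {2}hsym; ring.
by rewrite sqrtr_sqr ger0_norm // mulr_ge0.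
Qed.
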